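(* There exists a Heffter array $H(n;k)$ for all $n\equiv 1\pmod 4$ and $k\equiv 1\pmod 4$ with $5\le k<n$.
   Context: A Heffter array $H(n;k)$ is an $n\times n$ array in which some cells are filled with nonzero integers and the others are empty, such that: each row and each column contains exactly $k$ filled cells; the entries of every row and of every column sum to $0$ modulo $2nk+1$; and for each integer $1\le x\le nk$, exactly one of $x$ or $-x$ appears in the array, and it appears exactly once. *)

(* Defs.v *)
From HB Require Import structures.
From mathcomp Require Import all_boot all_order all_algebra.
Set Implicit Arguments. Unset Strict Implicit. Unset Printing Implicit Defensive.
Import Order.TTheory GRing.Theory Num.Theory.
Local Open Scope ring_scope.

(* An n x n partially filled array of integers: None = empty cell. *)
Definition parray (n : nat) := 'I_n -> 'I_n -> option int.

Definition entry (n : nat) (A : parray n) (i j : 'I_n) : int :=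
  if A i j is Some v then v else 0.

Definition is_heffter (n k : nat) (A : parray n) : Prop :=
  (forall i j v, A i j = Some v -> v != 0) /\
  (forall i : 'I_n, #|[set j : 'I_n | A i j != None]| = k) /\
  (forall j : 'I_n, #|[set i : 'I_n | A i j != None]| = k) /\
  (forall i : 'I_n, (((2 * n * k).+1)%:Z %| \sum_(j < n) entry A i j)%Z) /\
  (forall j : 'I_n, (((2 * n * k).+1)%:Z %| \sum_(i < n) entry A i j)%Z) /\
  (forall x : nat, (1 <= x <= n * k)%N ->
     #|[set p : 'I_n * 'I_n | (A p.1 p.2 == Some (x%:Z)) || (A p.1 p.2 == Some (- x%:Z))]| = 1%N).

Definition heffter_exists (n k : nat) : Prop := exists A : parray n, is_heffter k A.

(* Main.v *)
Require Import Defs.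
From HB Require Import structures.
From mathcomp Require Import all_boot all_order all_algebra.
From mathcomp Require Import zify ring.
Unset Implicit Arguments.
Import Order.TTheory GRing.Theory Num.Theory.


Definition inO (h m d : nat) : bool :=
  [|| d == 0, (0 < d < 2 * m - 1), (h - 1 <= d <= h + 1), (h + 2 <= d < h + 2 * m) | d == 2 * h].

Definition blk (h m d : nat) : nat :=
  if d == 0 then 4 * m - 3
  else if d < 2 * m - 1 then (if d %% 2 == 1 then 4 * ((d - 1) %/ 2) + 1 else 4 * ((d - 1) %/ 2) + 2)
  else if d == h - 1 then 4 * m - 2
  else if d == h then 4 * m
  else if d == h + 1 then 4 * m - 1
  else if d < h + 2 * m then (if (d - h) %% 2 == 0 then 4 * ((d - h - 2) %/ 2) + 3 else 4 * ((d - h - 2) %/ 2) + 4)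
  else 0.

Definition pos (h m d i : nat) : nat :=
  if d == 0 then (if i < h then 2 + 2 * i else if i < 2 * h then 2 * i + 1 - 2 * h else 0)
  else if d < 2 * m - 1 then (if (h + 1 <= i)%N then i - h - 1 else i + h)
  else if d == h - 1 then i
  else if d == h then (if i < h then 2 * h - 1 - 2 * i else 2 * i - 2 * h)
  else if d == h + 1 then (if i < 2 * h then 1 + i else 0)
  else if d < h + 2 * m then i
  else (if i < h then 2 * h - 1 - 2 * i else 4 * h - 2 * i).

Definition sgn (h m d i : nat) : bool :=
  if d == 0 then true
  else if d < 2 * m - 1 then d %% 2 == 0
  else if d == h - 1 then false
  else if d == h then i < h
  else if d == h + 1 then false
  else if d < h + 2 * m then (d - h) %% 2 == 0
  else false.

Definition absv (h m d i : nat) : nat := blk h m d * (2 * h + 1) + pos h m d i + 1.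

Definition F (h m d i : nat) : int :=
  if inO h m d then (if sgn h m d i then (- Posz (absv h m d i))%R else Posz (absv h m d i)) else 0%R.

Ltac decide_ifs :=
  repeat (match goal with
  | |- context [if ?c then _ else _] =>
    lazymatch c with true => fail | false => fail | context [if _ then _ else _] => fail | _ =>
    first [ rewrite (_ : c = true); last by lia
          | rewrite (_ : c = false); last by lia
          | let E := fresh "E" in case E: c ] end
  end; cbv iota).


Lemma F_s0 h m i : (1 <= m)%N -> (2 * m + 2 <= h)%N ->
  F h m 0 i = (- Posz ((4 * m - 3) * (2 * h + 1) + (if i < h then 2 + 2 * i else if i < 2 * h then 2 * i + 1 - 2 * h else 0) + 1)%N)%R.
Proof. move=> Hm Hh. rewrite /F /inO /sgn /absv /blk /pos. decide_ifs; lia. Qed.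

Lemma F_s1 h m i : (1 <= m)%N -> (2 * m + 2 <= h)%N ->
  F h m (h - 1) i = Posz ((4 * m - 2) * (2 * h + 1) + i + 1)%N.
Proof. move=> Hm Hh. rewrite /F /inO /sgn /absv /blk /pos. decide_ifs; lia. Qed.

Lemma F_s2 h m i : (1 <= m)%N -> (2 * m + 2 <= h)%N ->
  F h m h i = (if (i < h)%N then - Posz ((4 * m) * (2 * h + 1) + (2 * h - 1 - 2 * i) + 1)%N
               else Posz ((4 * m) * (2 * h + 1) + (2 * i - 2 * h) + 1)%N)%R.
Proof. move=> Hm Hh. rewrite /F /inO /sgn /absv /blk /pos. decide_ifs; lia. Qed.

Lemma F_s3 h m i : (1 <= m)%N -> (2 * m + 2 <= h)%N ->
  F h m (h + 1) i = Posz ((4 * m - 1) * (2 * h + 1) + (if i < 2 * h then 1 + i else 0) + 1)%N.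
Proof. move=> Hm Hh. rewrite /F /inO /sgn /absv /blk /pos. decide_ifs; lia. Qed.

Lemma F_s4 h m i : (1 <= m)%N -> (2 * m + 2 <= h)%N ->
  F h m (2 * h) i = Posz ((if i < h then 2 * h - 1 - 2 * i else 4 * h - 2 * i) + 1)%N.
Proof. move=> Hm Hh. rewrite /F /inO /sgn /absv /blk /pos. decide_ifs; lia. Qed.

Lemma special_row h m i : (1 <= m)%N -> (2 * m + 2 <= h)%N -> (i < 2 * h + 1)%N ->
  (F h m 0 i + F h m (h - 1) i + F h m h i + F h m (h + 1) i + F h m (2 * h) i =
   if (i < h)%N then 0 else Posz (2 * ((2 * h + 1) * (4 * m + 1)) + 1))%R.
Proof.
move=> Hm Hh Hi. rewrite F_s0 // F_s1 // F_s2 // F_s3 // F_s4 //.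
rewrite (_ : ((4 * m - 2) * (2 * h + 1) = (4 * m - 3) * (2 * h + 1) + (2 * h + 1))%N); last first.
  by rewrite (_ : (4 * m - 2 = (4 * m - 3) + 1)%N) ?mulnDl ?mul1n //; lia.
rewrite (_ : ((4 * m - 1) * (2 * h + 1) = (4 * m - 3) * (2 * h + 1) + 2 * (2 * h + 1))%N); last first.
  by rewrite (_ : (4 * m - 1 = (4 * m - 3) + 2)%N) ?mulnDl //; lia.
rewrite (_ : ((4 * m) * (2 * h + 1) = (4 * m - 3) * (2 * h + 1) + 3 * (2 * h + 1))%N); last first.
  by rewrite {1}(_ : (4 * m = (4 * m - 3) + 3)%N) ?mulnDl //; lia.
rewrite (_ : (2 * ((2 * h + 1) * (4 * m + 1)) + 1 = 2 * ((4 * m - 3) * (2 * h + 1)) + 8 * (2 * h + 1) + 1)%N); last first.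
  rewrite (mulnC (2 * h + 1)) (_ : (4 * m + 1 = (4 * m - 3) + 4)%N) ?mulnDl; lia.
move: ((4 * m - 3) * (2 * h + 1))%N => B.
decide_ifs; lia.
Qed.

Definition rho (h j d : nat) : nat := if d <= j then j - d else j + (2 * h + 1) - d.

Lemma special_col h m j : (1 <= m)%N -> (2 * m + 2 <= h)%N -> (j < 2 * h + 1)%N ->
  let s := (F h m 0 (rho h j 0) + F h m (h - 1) (rho h j (h - 1)) + F h m h (rho h j h)
     + F h m (h + 1) (rho h j (h + 1)) + F h m (2 * h) (rho h j (2 * h)))%R in
  s = 0%R \/ s = Posz (2 * ((2 * h + 1) * (4 * m + 1)) + 1) \/ s = (- Posz (2 * ((2 * h + 1) * (4 * m + 1)) + 1))%R.
Proof.
move=> Hm Hh Hj s. rewrite /s F_s0 // F_s1 // F_s2 // F_s3 // F_s4 // /rho.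
rewrite (_ : ((4 * m - 2) * (2 * h + 1) = (4 * m - 3) * (2 * h + 1) + (2 * h + 1))%N); last first.
  by rewrite (_ : (4 * m - 2 = (4 * m - 3) + 1)%N) ?mulnDl ?mul1n //; lia.
rewrite (_ : ((4 * m - 1) * (2 * h + 1) = (4 * m - 3) * (2 * h + 1) + 2 * (2 * h + 1))%N); last first.
  by rewrite (_ : (4 * m - 1 = (4 * m - 3) + 2)%N) ?mulnDl //; lia.
rewrite (_ : ((4 * m) * (2 * h + 1) = (4 * m - 3) * (2 * h + 1) + 3 * (2 * h + 1))%N); last first.
  by rewrite {1}(_ : (4 * m = (4 * m - 3) + 3)%N) ?mulnDl //; lia.
rewrite (_ : (2 * ((2 * h + 1) * (4 * m + 1)) + 1 = 2 * ((4 * m - 3) * (2 * h + 1)) + 8 * (2 * h + 1) + 1)%N); last first.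
  rewrite (mulnC (2 * h + 1)) (_ : (4 * m + 1 = (4 * m - 3) + 4)%N) ?mulnDl; lia.
move: ((4 * m - 3) * (2 * h + 1))%N => B.
decide_ifs; lia.
Qed.


Lemma F_q1 h m r i : (1 <= m)%N -> (2 * m + 2 <= h)%N -> (r < m - 1)%N ->
  F h m (2 * r + 1) i = Posz ((4 * r + 1) * (2 * h + 1) + (if h + 1 <= i then i - h - 1 else i + h) + 1)%N.
Proof.
move=> Hm Hh Hr. rewrite /F /inO /sgn /absv /blk /pos.
rewrite (_ : (2 * r + 1 - 1) %/ 2 = r); last by lia.
decide_ifs; lia.
Qed.

Lemma F_q2 h m r i : (1 <= m)%N -> (2 * m + 2 <= h)%N -> (r < m - 1)%N ->
  F h m (2 * r + 2) i = (- Posz ((4 * r + 2) * (2 * h + 1) + (if h + 1 <= i then i - h - 1 else i + h) + 1)%N)%R.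
Proof.
move=> Hm Hh Hr. rewrite /F /inO /sgn /absv /blk /pos.
rewrite (_ : (2 * r + 2 - 1) %/ 2 = r); last by lia.
decide_ifs; lia.
Qed.

Lemma F_q3 h m r i : (1 <= m)%N -> (2 * m + 2 <= h)%N -> (r < m - 1)%N ->
  F h m (h + 2 * r + 2) i = (- Posz ((4 * r + 3) * (2 * h + 1) + i + 1)%N)%R.
Proof.
move=> Hm Hh Hr. rewrite /F /inO /sgn /absv /blk /pos.
rewrite (_ : (h + 2 * r + 2 - h - 2) %/ 2 = r); last by lia.
decide_ifs; lia.
Qed.

Lemma F_q4 h m r i : (1 <= m)%N -> (2 * m + 2 <= h)%N -> (r < m - 1)%N ->
  F h m (h + 2 * r + 3) i = Posz ((4 * r + 4) * (2 * h + 1) + i + 1)%N.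
Proof.
move=> Hm Hh Hr. rewrite /F /inO /sgn /absv /blk /pos.
rewrite (_ : (h + 2 * r + 3 - h - 2) %/ 2 = r); last by lia.
decide_ifs; lia.
Qed.

Lemma quad_row h m r i : (1 <= m)%N -> (2 * m + 2 <= h)%N -> (i < 2 * h + 1)%N -> (r < m - 1)%N ->
  (F h m (2 * r + 1) i + F h m (2 * r + 2) i + F h m (h + 2 * r + 2) i + F h m (h + 2 * r + 3) i = 0)%R.
Proof.
move=> Hm Hh Hi Hr. rewrite F_q1 // F_q2 // F_q3 // F_q4 //.
decide_ifs; lia.
Qed.

Lemma quad_col h m r j : (1 <= m)%N -> (2 * m + 2 <= h)%N -> (j < 2 * h + 1)%N -> (r < m - 1)%N ->
  (F h m (2 * r + 1) (rho h j (2 * r + 1)) + F h m (2 * r + 2) (rho h j (2 * r + 2))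
   + F h m (h + 2 * r + 2) (rho h j (h + 2 * r + 2)) + F h m (h + 2 * r + 3) (rho h j (h + 2 * r + 3)) = 0)%R.
Proof.
move=> Hm Hh Hi Hr. rewrite F_q1 // F_q2 // F_q3 // F_q4 // /rho.
decide_ifs; lia.
Qed.
Section Big.
Context {R : Type} {idx : R} (op : Monoid.com_law idx).

Lemma big_pairs a p (g : nat -> R) :
  \big[op/idx]_(a <= d < a + 2 * p) g d = \big[op/idx]_(r < p) (op (g (a + 2 * r)) (g (a + 2 * r + 1))).
Proof.
elim: p => [|p IH]; first by rewrite addn0 big_geq // big_ord0.
rewrite big_ord_recr /= -IH.
rewrite (_ : a + 2 * p.+1 = (a + 2 * p + 1).+1); last by lia.
rewrite big_nat_recr; last by lia.
rewrite addn1 big_nat_recr; last by lia.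
by rewrite -Monoid.mulmA.
Qed.

Lemma big_zero a b (g : nat -> R) (P : nat -> bool) :
  (forall d, a <= d < b -> P d = false) ->
  \big[op/idx]_(a <= d < b) (if P d then g d else idx) = idx.
Proof.
move=> H. rewrite big_nat_cond big1 // => d /andP [Hd _]. by rewrite H.
Qed.

Lemma big_one a b (g : nat -> R) : b = a + 1 -> \big[op/idx]_(a <= i < b) g i = g a.
Proof. by move=> ->; rewrite addn1 big_nat1. Qed.

Lemma split_big h m (g : nat -> R) : 1 <= m -> 2 * m + 2 <= h ->
  \big[op/idx]_(d < 2 * h + 1) (if inO h m d then g d else idx) =
  op (g 0) (op (\big[op/idx]_(r < m - 1) (op (g (2 * r + 1)) (g (2 * r + 2))))
   (op (g (h - 1)) (op (g h) (op (g (h + 1)) (op (\big[op/idx]_(r < m - 1) (op (g (h + 2 * r + 2)) (g (h + 2 * r + 3))))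
   (g (2 * h))))))).
Proof.
move=> Hm Hh.
set G := fun d => if inO h m d then g d else idx.
rewrite -(big_mkord xpredT G).
rewrite (@big_cat_nat _ _ _ 1) //; last by lia.
rewrite big_nat1 {1}/G (_ : inO h m 0 = true); last by rewrite /inO; lia.
congr (op _ _).
rewrite (@big_cat_nat _ _ _ (1 + 2 * (m - 1))) //; last by lia.
rewrite big_pairs.
congr (op _ _).
  apply: eq_bigr => [[r Hr]] _ /=. rewrite /G.
  rewrite (_ : inO h m (1 + 2 * r) = true); last by rewrite /inO; lia.
  rewrite (_ : inO h m (1 + 2 * r + 1) = true); last by rewrite /inO; lia.
  congr (op (g _) (g _)); lia.
rewrite (@big_cat_nat _ _ _ (h - 1)) //; try lia.
rewrite big_zero; last by move=> d Hd; rewrite /inO; lia.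
rewrite Monoid.mul1m.
rewrite (@big_cat_nat _ _ _ h) //; try lia.
rewrite (@big_one (h - 1) h); last by lia.
rewrite {1}/G (_ : inO h m (h - 1) = true); last by rewrite /inO; lia.
congr (op _ _).
rewrite (@big_cat_nat _ _ _ (h + 1)) //; try lia.
rewrite (@big_one h (h + 1)) // {1}/G (_ : inO h m h = true); last by rewrite /inO; lia.
congr (op _ _).
rewrite (@big_cat_nat _ _ _ (h + 2)) //; try lia.
rewrite (@big_one (h + 1) (h + 2)); last by lia.
rewrite {1}/G (_ : inO h m (h + 1) = true); last by rewrite /inO; lia.
congr (op _ _).
rewrite (@big_cat_nat _ _ _ (h + 2 + 2 * (m - 1))) //; try lia.
rewrite big_pairs.
congr (op _ _).
  apply: eq_bigr => [[r Hr]] _ /=. rewrite /G.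
  rewrite (_ : inO h m (h + 2 + 2 * r) = true); last by rewrite /inO; lia.
  rewrite (_ : inO h m (h + 2 + 2 * r + 1) = true); last by rewrite /inO; lia.
  congr (op (g _) (g _)); lia.
rewrite (@big_cat_nat _ _ _ (2 * h)) //; try lia.
rewrite big_zero; last by move=> d Hd; rewrite /inO; lia.
rewrite Monoid.mul1m (@big_one (2 * h) (2 * h + 1)) // /G (_ : inO h m (2 * h) = true) //; rewrite /inO; lia.
Qed.
End Big.

Lemma modrho n j d : (j < n)%N -> (d < n)%N -> ((j + n - d) %% n = if d <= j then j - d else j + n - d)%N.
Proof.
move=> Hj Hd. case: leqP => H.
  rewrite (_ : j + n - d = (j - d) + n)%N; last by lia.
  rewrite modnDr modn_small //; lia.
rewrite modn_small //; lia.
Qed.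

Lemma big_perm_ord {R : Type} {idx : R} (op : Monoid.com_law idx) n (s : nat -> nat) (f : nat -> R) :
  (forall i, (i < n)%N -> (s i < n)%N) ->
  (forall i j, (i < n)%N -> (j < n)%N -> s i = s j -> i = j) ->
  \big[op/idx]_(i < n) f (s i) = \big[op/idx]_(i < n) f i.
Proof.
move=> Hs Hinj.
pose s' : 'I_n -> 'I_n := fun i => Ordinal (Hs i (ltn_ord i)).
have inj_s : injective s'.
  move=> [i Hi] [j Hj] E. apply: val_inj => /=. apply: Hinj => //.
  by move/(congr1 val): E.
by rewrite [RHS](reindex_inj inj_s).
Qed.

Definition Arr (h m : nat) : parray (2 * h + 1) :=
  fun i j => let d := ((j + (2 * h + 1) - i) %% (2 * h + 1))%N in
    if inO h m d then Some (F h m d i) else None.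

Lemma entry_Arr h m (i j : 'I_(2 * h + 1)) :
  entry (Arr h m) i j = F h m ((j + (2 * h + 1) - i) %% (2 * h + 1))%N i.
Proof. rewrite /entry /Arr /=. case: ifP => // H. by rewrite /F H. Qed.

Lemma sum_row h (i : nat) (g : nat -> nat -> int) : (i < 2 * h + 1)%N ->
  (\sum_(j < 2 * h + 1) g ((j + (2 * h + 1) - i) %% (2 * h + 1))%N i = \sum_(d < 2 * h + 1) g d i)%R.
Proof.
move=> Hi. apply: (@big_perm_ord _ _ +%R (2 * h + 1) (fun j => ((j + (2 * h + 1) - i) %% (2 * h + 1))%N) (fun d => g d i)).
  move=> j Hj. rewrite ltn_mod; lia.
move=> j j' Hj Hj'. rewrite !modrho //. case: ifP; case: ifP; lia.
Qed.

Lemma sum_col h (j : nat) (g : nat -> nat -> int) : (j < 2 * h + 1)%N ->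
  (\sum_(i < 2 * h + 1) g ((j + (2 * h + 1) - i) %% (2 * h + 1))%N i = \sum_(d < 2 * h + 1) g d (rho h j d))%R.
Proof.
move=> Hj.
rewrite -(@big_perm_ord _ _ +%R (2 * h + 1) (fun d => ((j + (2 * h + 1) - d) %% (2 * h + 1))%N) (fun i => g ((j + (2 * h + 1) - i) %% (2 * h + 1))%N i)).
- apply: eq_bigr => [[d Hd]] _ /=.
  have E1 : ((j + (2 * h + 1) - d) %% (2 * h + 1) = rho h j d)%N by rewrite modrho.
  rewrite E1 modrho //; last by rewrite /rho; case: ifP; lia.
  congr (g _ _). rewrite /rho. case: ifP; case: ifP; lia.
- move=> d Hd. rewrite ltn_mod; lia.
- move=> d d' Hd Hd'. rewrite !modrho //. case: ifP; case: ifP; lia.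
Qed.

Lemma F_out h m d i : inO h m d = false -> F h m d i = 0%R.
Proof. by rewrite /F => ->. Qed.


Lemma sumF_split h m (g : nat -> int) : (1 <= m)%N -> (2 * m + 2 <= h)%N ->
  (forall d, inO h m d = false -> g d = 0%R) ->
  (\sum_(d < 2 * h + 1) g d = (g 0 + g (h - 1)%N + g h + g (h + 1)%N + g (2 * h)%N)
     + \sum_(r < m - 1) (g (2 * r + 1)%N + g (2 * r + 2)%N + g (h + 2 * r + 2)%N + g (h + 2 * r + 3)%N))%R.
Proof.
move=> Hm Hh Hg.
rewrite (eq_bigr (fun d : 'I_(2 * h + 1) => if inO h m d then g d else 0%R)); last first.
  move=> d _. case: ifP => // H. by rewrite Hg.
rewrite (@split_big _ _ +%R) // /=.
have E : (\sum_(r < m - 1) (g (2 * r + 1)%N + g (2 * r + 2)%N + g (h + 2 * r + 2)%N + g (h + 2 * r + 3)%N) =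
  \sum_(r < m - 1) (g (2 * r + 1)%N + g (2 * r + 2)%N) + \sum_(r < m - 1) (g (h + 2 * r + 2)%N + g (h + 2 * r + 3)%N))%R.
  by rewrite -big_split; apply: eq_bigr => r _ /=; rewrite !GRing.addrA.
rewrite E. ring.
Qed.

Lemma big_row {R : Type} {idx : R} (op : Monoid.com_law idx) h (i : nat) (g : nat -> R) : (i < 2 * h + 1)%N ->
  \big[op/idx]_(j < 2 * h + 1) g ((j + (2 * h + 1) - i) %% (2 * h + 1))%N = \big[op/idx]_(d < 2 * h + 1) g d.
Proof.
move=> Hi. apply: (@big_perm_ord _ _ op (2 * h + 1) (fun j => ((j + (2 * h + 1) - i) %% (2 * h + 1))%N) g).
  move=> j Hj. rewrite ltn_mod; lia.
move=> j j' Hj Hj'. rewrite !modrho //. case: ifP; case: ifP; lia.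
Qed.

Lemma big_col {R : Type} {idx : R} (op : Monoid.com_law idx) h (j : nat) (g : nat -> nat -> R) : (j < 2 * h + 1)%N ->
  \big[op/idx]_(i < 2 * h + 1) g ((j + (2 * h + 1) - i) %% (2 * h + 1))%N i = \big[op/idx]_(d < 2 * h + 1) g d (rho h j d).
Proof.
move=> Hj.
rewrite -(@big_perm_ord _ _ op (2 * h + 1) (fun d => ((j + (2 * h + 1) - d) %% (2 * h + 1))%N) (fun i => g ((j + (2 * h + 1) - i) %% (2 * h + 1))%N i)).
- apply: eq_bigr => [[d Hd]] _ /=.
  have E1 : ((j + (2 * h + 1) - d) %% (2 * h + 1) = rho h j d)%N by rewrite modrho.
  rewrite E1 modrho //; last by rewrite /rho; case: ifP; lia.
  congr (g _ _). rewrite /rho. case: ifP; case: ifP; lia.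
- move=> d Hd. rewrite ltn_mod; lia.
- move=> d d' Hd Hd'. rewrite !modrho //. case: ifP; case: ifP; lia.
Qed.

Lemma row_ok h m (i : 'I_(2 * h + 1)) : (1 <= m)%N -> (2 * m + 2 <= h)%N ->
  (((2 * (2 * h + 1) * (4 * m + 1)).+1)%:Z %| (\sum_(j < 2 * h + 1) entry (Arr h m) i j)%R)%Z.
Proof.
move=> Hm Hh.
rewrite (eq_bigr (fun j : 'I_(2 * h + 1) => F h m ((j + (2 * h + 1) - i) %% (2 * h + 1))%N i)); last by move=> j _; rewrite entry_Arr.
rewrite (@big_row _ _ +%R h i (fun d => F h m d i)) //.
rewrite (sumF_split h m (fun d => F h m d i)) //; last by move=> d; apply: F_out.
rewrite big1 ?GRing.addr0; last by move=> r _; apply: quad_row => //; exact: ltn_ord.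
rewrite special_row //. case: ifP => _; first exact: dvdz0.
rewrite (_ : (2 * (2 * h + 1) * (4 * m + 1)).+1 = 2 * ((2 * h + 1) * (4 * m + 1)) + 1)%N; last by lia.
exact: dvdzz.
Qed.

Lemma col_ok h m (j : 'I_(2 * h + 1)) : (1 <= m)%N -> (2 * m + 2 <= h)%N ->
  (((2 * (2 * h + 1) * (4 * m + 1)).+1)%:Z %| (\sum_(i < 2 * h + 1) entry (Arr h m) i j)%R)%Z.
Proof.
move=> Hm Hh.
rewrite (eq_bigr (fun i : 'I_(2 * h + 1) => F h m ((j + (2 * h + 1) - i) %% (2 * h + 1))%N i)); last by move=> i _; rewrite entry_Arr.
rewrite (@big_col _ _ +%R h j (F h m)) //.
rewrite (sumF_split h m (fun d => F h m d (rho h j d))) //; last by move=> d; apply: F_out.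
rewrite big1 ?GRing.addr0; last by move=> r _; apply: quad_col => //; exact: ltn_ord.
rewrite (_ : (2 * (2 * h + 1) * (4 * m + 1)).+1 = 2 * ((2 * h + 1) * (4 * m + 1)) + 1)%N; last by lia.
have [->|[->|->]] := special_col h m j Hm Hh (ltn_ord j).
- exact: dvdz0.
- exact: dvdzz.
- by apply/dvdzP; exists (-1)%R; rewrite GRing.mulN1r.
Qed.

Lemma count_O h m : (1 <= m)%N -> (2 * m + 2 <= h)%N ->
  (\sum_(d < 2 * h + 1) (if inO h m d then 1 else 0) = 4 * m + 1)%N.
Proof.
move=> Hm Hh.
rewrite (@split_big _ _ addn h m (fun _ => 1%N)) //.
rewrite !big_const_ord !iter_addn_0. rewrite /=. lia.
Qed.

Lemma row_count h m (i : 'I_(2 * h + 1)) : (1 <= m)%N -> (2 * m + 2 <= h)%N ->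
  #|[set j : 'I_(2 * h + 1) | Arr h m i j != None]| = (4 * m + 1)%N.
Proof.
move=> Hm Hh.
rewrite -sum1_card big_mkcond /=.
rewrite (eq_bigr (fun j : 'I_(2 * h + 1) => if inO h m ((j + (2 * h + 1) - i) %% (2 * h + 1)) then 1 else 0)%N); last first.
  by move=> j _; rewrite inE /Arr; case: inO.
rewrite (@big_row _ _ addn h i (fun d => if inO h m d then 1 else 0)%N) //.
exact: count_O.
Qed.

Lemma col_count h m (j : 'I_(2 * h + 1)) : (1 <= m)%N -> (2 * m + 2 <= h)%N ->
  #|[set i : 'I_(2 * h + 1) | Arr h m i j != None]| = (4 * m + 1)%N.
Proof.
move=> Hm Hh.
rewrite -sum1_card big_mkcond /=.
rewrite (eq_bigr (fun i : 'I_(2 * h + 1) => if inO h m ((j + (2 * h + 1) - i) %% (2 * h + 1)) then 1 else 0)%N); last first.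
  by move=> i _; rewrite inE /Arr; case: inO.
rewrite (@big_col _ _ addn h j (fun d _ => if inO h m d then 1 else 0)%N) //.
exact: count_O.
Qed.

Lemma inO_cases h m d : (1 <= m)%N -> (2 * m + 2 <= h)%N -> inO h m d -> (d < 2 * h + 1)%N ->
  d = 0%N \/ d = (h - 1)%N \/ d = h \/ d = (h + 1)%N \/ d = (2 * h)%N \/
   exists r, (r < m - 1)%N /\ (d = (2 * r + 1)%N \/ d = (2 * r + 2)%N \/ d = (h + 2 * r + 2)%N \/ d = (h + 2 * r + 3)%N).
Proof.
rewrite /inO => Hm Hh HO Hd.
case/orP: HO => [/eqP ->|]; first by left.
case/orP => [H|].
  do 5 right; exists ((d - 1) %/ 2).
  split; first lia.
  have : (d = 2 * ((d - 1) %/ 2) + 1 \/ d = 2 * ((d - 1) %/ 2) + 2)%N by lia.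
  by case=> E; [left | right; left].
case/orP => [H|].
  have : (d = h - 1 \/ d = h \/ d = h + 1)%N by lia.
  by case=> [E|[E|E]]; [right; left | right; right; left | do 3 right; left].
case/orP => [H|/eqP E]; last by do 4 right; left.
do 5 right; exists ((d - h - 2) %/ 2).
split; first lia.
have : (d = h + 2 * ((d - h - 2) %/ 2) + 2 \/ d = h + 2 * ((d - h - 2) %/ 2) + 3)%N by lia.
by case=> E; [right; right; left | do 3 right].
Qed.

Definition decode (h m I : nat) : nat :=
  if I == 0 then 2 * h
  else if I == 4 * m - 3 then 0
  else if I == 4 * m - 2 then h - 1
  else if I == 4 * m - 1 then h + 1
  else if I == 4 * m then h
  else if (I - 1) %% 4 == 0 then 2 * ((I - 1) %/ 4) + 1
  else if (I - 1) %% 4 == 1 then 2 * ((I - 1) %/ 4) + 2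
  else if (I - 1) %% 4 == 2 then h + 2 * ((I - 1) %/ 4) + 2
  else h + 2 * ((I - 1) %/ 4) + 3.

Lemma pos_small h m d i : (1 <= m)%N -> (2 * m + 2 <= h)%N -> inO h m d -> (d < 2 * h + 1)%N -> (i < 2 * h + 1)%N ->
  (pos h m d i < 2 * h + 1)%N /\ (decode h m (blk h m d) = d) /\ (blk h m d <= 4 * m)%N.
Proof.
move=> Hm Hh HO Hd Hi.
case: (inO_cases h m d Hm Hh HO Hd) => [->|[->|[->|[->|[->|[r [Hr Hc]]]]]]].
- rewrite /pos /blk /decode. decide_ifs; lia.
- rewrite /pos /blk /decode. decide_ifs; lia.
- rewrite /pos /blk /decode. decide_ifs; lia.
- rewrite /pos /blk /decode. decide_ifs; lia.
- rewrite /pos /blk /decode. decide_ifs; lia.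
- case: Hc => [->|[->|[->|->]]].
  + rewrite /pos /blk. rewrite (_ : ((2 * r + 1 - 1) %/ 2 = r)%N); last by lia.
    rewrite /decode. decide_ifs; lia.
  + rewrite /pos /blk. rewrite (_ : ((2 * r + 2 - 1) %/ 2 = r)%N); last by lia.
    rewrite /decode. decide_ifs; lia.
  + rewrite /pos /blk. rewrite (_ : ((h + 2 * r + 2 - h - 2) %/ 2 = r)%N); last by lia.
    rewrite /decode. decide_ifs; lia.
  + rewrite /pos /blk. rewrite (_ : ((h + 2 * r + 3 - h - 2) %/ 2 = r)%N); last by lia.
    rewrite /decode. decide_ifs; lia.
Qed.

Lemma pos_lt h m d i : (1 <= m)%N -> (2 * m + 2 <= h)%N -> inO h m d -> (d < 2 * h + 1)%N -> (i < 2 * h + 1)%N ->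
  (pos h m d i < 2 * h + 1)%N.
Proof. by move=> Hm Hh HO Hd Hi; case: (pos_small h m d i Hm Hh HO Hd Hi). Qed.

Lemma blk_le h m d : (1 <= m)%N -> (2 * m + 2 <= h)%N -> inO h m d -> (d < 2 * h + 1)%N ->
  (blk h m d <= 4 * m)%N.
Proof. by move=> Hm Hh HO Hd; case: (pos_small h m d 0 Hm Hh HO Hd) => //; lia. Qed.

Lemma blk_inj h m d d' : (1 <= m)%N -> (2 * m + 2 <= h)%N -> inO h m d -> inO h m d' ->
  (d < 2 * h + 1)%N -> (d' < 2 * h + 1)%N -> blk h m d = blk h m d' -> d = d'.
Proof.
move=> Hm Hh HO HO' Hd Hd' E.
have [_ [D1 _]] := pos_small h m d 0 Hm Hh HO Hd ltac:(lia).
have [_ [D2 _]] := pos_small h m d' 0 Hm Hh HO' Hd' ltac:(lia).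
by rewrite -D1 -D2 E.
Qed.

Lemma pos_inj h m d i i' : (1 <= m)%N -> (2 * m + 2 <= h)%N -> inO h m d ->
  (d < 2 * h + 1)%N -> (i < 2 * h + 1)%N -> (i' < 2 * h + 1)%N -> pos h m d i = pos h m d i' -> i = i'.
Proof.
move=> Hm Hh HO Hd Hi Hi'.
case: (inO_cases h m d Hm Hh HO Hd) => [->|[->|[->|[->|[->|[r [Hr Hc]]]]]]].
- rewrite /pos. decide_ifs; lia.
- rewrite /pos. decide_ifs; lia.
- rewrite /pos. decide_ifs; lia.
- rewrite /pos. decide_ifs; lia.
- rewrite /pos. decide_ifs; lia.
- case: Hc => [->|[->|[->|->]]]; rewrite /pos; decide_ifs; lia.
Qed.

Lemma blk_eq_of x y p q n : (p < n)%N -> (q < n)%N -> (x * n + p = y * n + q)%N -> x = y.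
Proof.
move=> Hp Hq E.
have Hn : (0 < n)%N by lia.
have := congr1 (fun z => z %/ n)%N E => /=.
by rewrite !divnMDl // !divn_small // !addn0.
Qed.

Lemma absv_inj h m d d' i i' : (1 <= m)%N -> (2 * m + 2 <= h)%N -> inO h m d -> inO h m d' ->
  (d < 2 * h + 1)%N -> (d' < 2 * h + 1)%N -> (i < 2 * h + 1)%N -> (i' < 2 * h + 1)%N ->
  absv h m d i = absv h m d' i' -> d = d' /\ i = i'.
Proof.
move=> Hm Hh HO HO' Hd Hd' Hi Hi'. rewrite /absv => E'.
have E : (blk h m d * (2 * h + 1) + pos h m d i = blk h m d' * (2 * h + 1) + pos h m d' i')%N.
  by apply/eqP; rewrite -(eqn_add2r 1) E'.
have P1 := pos_lt h m d i Hm Hh HO Hd Hi.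
have P2 := pos_lt h m d' i' Hm Hh HO' Hd' Hi'.
have EB := blk_eq_of _ _ _ _ _ P1 P2 E.
have Ed := blk_inj h m d d' Hm Hh HO HO' Hd Hd' EB.
subst d'. split => //.
have E2 := addnI E.
exact: (pos_inj h m d i i' Hm Hh HO Hd Hi Hi' E2).
Qed.

Lemma absv_range h m d i : (1 <= m)%N -> (2 * m + 2 <= h)%N -> inO h m d ->
  (d < 2 * h + 1)%N -> (i < 2 * h + 1)%N ->
  (1 <= absv h m d i <= (2 * h + 1) * (4 * m + 1))%N.
Proof.
move=> Hm Hh HO Hd Hi. rewrite /absv.
have P1 := pos_lt h m d i Hm Hh HO Hd Hi.
have H1 := leq_mul (blk_le h m d Hm Hh HO Hd) (leqnn (2 * h + 1)).
rewrite (_ : ((2 * h + 1) * (4 * m + 1) = 4 * m * (2 * h + 1) + (2 * h + 1))%N); last by rewrite mulnDr muln1 mulnC.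
move: H1. move: (blk h m d * (2 * h + 1))%N (4 * m * (2 * h + 1))%N => X Y H1.
lia.
Qed.

Definition dd (h : nat) (p : 'I_(2 * h + 1) * 'I_(2 * h + 1)) : nat :=
  ((p.2 + (2 * h + 1) - p.1) %% (2 * h + 1))%N.

Lemma dd_lt h p : (dd h p < 2 * h + 1)%N.
Proof. rewrite /dd ltn_mod. lia. Qed.

Lemma key_eq h m x (p : 'I_(2 * h + 1) * 'I_(2 * h + 1)) : (1 <= x)%N ->
  ((Arr h m p.1 p.2 == Some (Posz x)) || (Arr h m p.1 p.2 == Some (- Posz x)%R)) =
  (inO h m (dd h p) && (absv h m (dd h p) p.1 == x)).
Proof.
move=> Hx. rewrite /Arr /dd /=. case: ifP => HO //=.
rewrite /F HO. case: sgn => /=.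
- apply/idP/idP.
  + case/orP => /eqP [E]; lia.
  + move/eqP => E. apply/orP; right. apply/eqP. by rewrite E.
- apply/idP/idP.
  + case/orP => /eqP [E]; lia.
  + move/eqP => E. apply/orP; left. apply/eqP. by rewrite E.
Qed.

Lemma cell_inj h m (p q : 'I_(2 * h + 1) * 'I_(2 * h + 1)) : (1 <= m)%N -> (2 * m + 2 <= h)%N ->
  inO h m (dd h p) -> inO h m (dd h q) -> absv h m (dd h p) p.1 = absv h m (dd h q) q.1 -> p = q.
Proof.
move=> Hm Hh Hp Hq E.
have [Ed Ei] := absv_inj h m _ _ _ _ Hm Hh Hp Hq (dd_lt h p) (dd_lt h q) (ltn_ord _) (ltn_ord _) E.
move: Ed Ei. rewrite /dd.
clear Hp Hq E. case: p => [[i Hi] [j Hj]]; case: q => [[i' Hi'] [j' Hj']] /= Ej Ei. subst i'.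
move: Ej. rewrite !modrho //. move=> Ej.
have Ejj : j = j' by move: Ej; case: ifP; case: ifP; lia.
subst j'. congr (_, _); exact: val_inj.
Qed.

Lemma card_S h m : (1 <= m)%N -> (2 * m + 2 <= h)%N ->
  #|[set p : 'I_(2 * h + 1) * 'I_(2 * h + 1) | inO h m (dd h p)]| = ((2 * h + 1) * (4 * m + 1))%N.
Proof.
move=> Hm Hh.
rewrite -sum1_card big_mkcond /=.
rewrite (eq_bigr (fun p : 'I_(2 * h + 1) * 'I_(2 * h + 1) => (fun (i j : 'I_(2 * h + 1)) =>
   if inO h m ((j + (2 * h + 1) - i) %% (2 * h + 1)) then 1 else 0)%N p.1 p.2)); last first.
  by move=> p _; rewrite inE.
rewrite -(pair_bigA addn (fun (i j : 'I_(2 * h + 1)) => if inO h m ((j + (2 * h + 1) - i) %% (2 * h + 1)) then 1 else 0)%N) /=.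
rewrite (eq_bigr (fun _ => 4 * m + 1)%N); last first.
  move=> i _. rewrite (@big_row _ _ addn h i (fun d => if inO h m d then 1 else 0)%N) //.
  exact: count_O.
by rewrite big_const_ord iter_addn_0 mulnC.
Qed.

Lemma values_ok h m x : (1 <= m)%N -> (2 * m + 2 <= h)%N -> (1 <= x <= (2 * h + 1) * (4 * m + 1))%N ->
  #|[set p : 'I_(2 * h + 1) * 'I_(2 * h + 1) |
      (Arr h m p.1 p.2 == Some (Posz x)) || (Arr h m p.1 p.2 == Some (- Posz x)%R)]| = 1%N.
Proof.
move=> Hm Hh /andP [Hx1 Hx2].
set M := ((2 * h + 1) * (4 * m + 1))%N.
set S := [set p : 'I_(2 * h + 1) * 'I_(2 * h + 1) | inO h m (dd h p)].
pose phi := fun p : 'I_(2 * h + 1) * 'I_(2 * h + 1) => absv h m (dd h p) p.1.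
have phiR : forall p, p \in S -> (1 <= phi p <= M)%N.
  move=> p; rewrite inE => Hp. exact: (absv_range h m _ _ Hm Hh Hp (dd_lt h p) (ltn_ord _)).
pose f := fun p => (inord (phi p) : 'I_M.+1).
have finj : {in S &, injective f}.
  move=> p q Hp Hq /(congr1 val) /=.
  have := phiR p Hp; have := phiR q Hq => Rq Rp.
  rewrite !inordK; try lia.
  move: Hp Hq; rewrite !inE => Hp Hq E.
  exact: (cell_inj h m p q Hm Hh Hp Hq E).
have cT := card_in_imset finj.
have sub : [set f p | p in S] \subset [set~ ord0].
  apply/subsetP => y /imsetP [p Hp ->]. rewrite !inE. apply/eqP => /(congr1 val) /=.
  have := phiR p Hp => Rp. rewrite inordK; lia.
have eqT : [set f p | p in S] = [set~ ord0].
  apply/eqP. rewrite eqEcard sub cardsC1 card_ord cT card_S // /M /=. lia.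
have : (inord x : 'I_M.+1) \in [set f p | p in S].
  rewrite eqT !inE. apply/eqP => /(congr1 val) /=. rewrite inordK; lia.
case/imsetP => p0 Hp0 Ex.
have Ephi : phi p0 = x.
  move/(congr1 val): Ex => /=. have := phiR p0 Hp0 => Rp. rewrite !inordK; lia.
have Hp0' : inO h m (dd h p0) by move: Hp0; rewrite inE.
rewrite (_ : [set p | _] = [set p0]) ?cards1 //.
apply/setP => p. rewrite !inE key_eq //. apply/idP/idP.
- case/andP => Hp /eqP Ep. apply/eqP. apply: (cell_inj h m p p0 Hm Hh Hp Hp0').
  rewrite Ep. exact: esym Ephi.
- move/eqP ->. by rewrite Hp0' /= -/(phi p0) Ephi.
Qed.



Lemma Arr_nonzero h m (i j : 'I_(2 * h + 1)) v : (1 <= m)%N -> (2 * m + 2 <= h)%N ->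
  Arr h m i j = Some v -> v != 0%R.
Proof.
move=> Hm Hh. rewrite /Arr /=. case: ifP => HO // [<-].
have Hd : ((j + (2 * h + 1) - i) %% (2 * h + 1) < 2 * h + 1)%N by rewrite ltn_mod; lia.
have := absv_range h m _ i Hm Hh HO Hd (ltn_ord i).
rewrite /F HO. case: sgn => R; lia.
Qed.

Lemma construct h m : (1 <= m)%N -> (2 * m + 2 <= h)%N -> heffter_exists (2 * h + 1) (4 * m + 1).
Proof.
move=> Hm Hh. exists (Arr h m). rewrite /is_heffter.
split; first by move=> i j v; exact: Arr_nonzero.
split; first by move=> i; exact: row_count.
split; first by move=> j; exact: col_count.
split; first by move=> i; exact: row_ok.
split; first by move=> j; exact: col_ok.
by move=> x Hx; exact: values_ok.
Qed.

Theorem theorem6p2 (n k : nat) :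
  n %% 4 = 1 -> k %% 4 = 1 -> 5 <= k -> k < n -> heffter_exists n k.
Proof.
move=> Hn Hk H5 Hkn.
have En : n = 2 * (2 * (n %/ 4)) + 1 by lia.
have Ek : k = 4 * (k %/ 4) + 1 by lia.
rewrite En Ek. apply: construct; lia.
Qed.
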